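(* Let $n$ be a positive integer and let $z$ be a complex number such that all denominators below are nonzero. Then $$\sum_{k=1}^n\binom{2k}{k}(3k-2n+z)\,\frac{\prod_{j=1}^{k-1}(j-n)(j-n+z)}{\prod_{j=1}^{k}(j^2-z^2)}=\frac{2}{n-z},$$ and $$\sum_{k=n}^{\infty}\frac{3k-2n+z}{k\binom{2k}{k}}\cdot\frac{\prod_{j=1}^{k-1}(j^2-z^2)}{\prod_{j=1,\,j\neq n}^{k}(j-n)(j-n+z)}=1.$$ *)

(* Defs.v *)
From HB Require Import structures.
From mathcomp Require Import all_boot all_order all_algebra.
From mathcomp Require Import all_classical all_reals all_analysis.
From mathcomp Require Export complex.
Import Order.TTheory GRing.Theory Num.Theory.
Import numFieldTopology.Exports numFieldNormedType.Exports.
Local Open Scope ring_scope.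

(* Equip R[i] with its standard (modulus) topology and normed-module
   structure, copied from the generic numFieldType instances on R[i]^o. *)
HB.instance Definition _ (R : rcfType) := PseudoPointedMetric.copy R[i] (R[i])^o.
HB.instance Definition _ (R : rcfType) := NormedModule.copy R[i] (R[i])^o.

(* Main.v *)
Require Import Defs.
From HB Require Import structures.
From mathcomp Require Import all_boot all_order all_algebra.
From mathcomp Require Import all_classical all_reals all_analysis.
From mathcomp Require Import complex.
From mathcomp Require Import ring lra zify.
Import Order.TTheory GRing.Theory Num.Theory.
Import numFieldTopology.Exports numFieldNormedType.Exports.
Local Open Scope ring_scope.
Local Open Scope classical_set_scope.

Definition Qp {F : numFieldType} (z : F) k := \prod_(1 <= j < k.+1) (j%:R ^+ 2 - z ^+ 2).
Definition Pf {F : numFieldType} (n : nat) (z : F) k :=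
  \prod_(1 <= j < k) ((j%:R - n%:R) * (j%:R - n%:R + z)).
Definition Cb (F : numFieldType) k : F := 'C(k.*2, k)%:R.

Lemma binS k : ('C(k.+1.*2, k.+1) * k.+1 = 2 * k.*2.+1 * 'C(k.*2, k))%N.
Proof.
have h1 := mul_bin_diag k.+1.*2 k.
have h2 := mul_bin_diag k.*2.+1 k.
have h3 : 'C(k.*2.+1, k.+1) = 'C(k.*2.+1, k).
  rewrite -bin_sub; last by rewrite -addnn; lia.
  congr 'C(_, _); rewrite -addnn; lia.
rewrite /= in h1 h2.
rewrite doubleS in h1 *.
rewrite h3 in h2; rewrite mulnC -h1 -mulnA h2; rewrite -!muln2; lia.
Qed.

Lemma CbS (F : numFieldType) k : Cb F k.+1 * k.+1%:R = 2%:R * (2%:R * k%:R + 1) * Cb F k.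
Proof.
rewrite /Cb -natrM binS !natrM -[k.*2.+1]addn1 -muln2 natrD natrM; ring.
Qed.

Lemma Qp_rec (F : numFieldType) (z : F) k : Qp z k.+1 = Qp z k * (k.+1%:R ^+ 2 - z ^+ 2).
Proof. by rewrite /Qp big_nat_recr. Qed.

Lemma Pf_rec (F : numFieldType) n (z : F) k : (0 < k)%N ->
  Pf n z k.+1 = Pf n z k * ((k%:R - n%:R) * (k%:R - n%:R + z)).
Proof. by move=> hk; rewrite /Pf big_nat_recr. Qed.

Lemma Pf_shift (F : numFieldType) n (z : F) k : (0 < k)%N ->
  Pf n z k * (n%:R * (n%:R - z)) =
  Pf n.+1 z k * ((n%:R - k%:R + 1) * (n%:R - k%:R + 1 - z)).
Proof.
elim: k => // k IH _.
case: k IH => [_|k IH].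
  by rewrite /Pf !big_geq // !mul1r; ring.
rewrite (@Pf_rec _ n z k.+1) // (@Pf_rec _ n.+1 z k.+1) //.
have -> : Pf n z k.+1 * ((k.+1%:R - n%:R) * (k.+1%:R - n%:R + z)) * (n%:R * (n%:R - z))
  = (Pf n z k.+1 * (n%:R * (n%:R - z))) * ((k.+1%:R - n%:R) * (k.+1%:R - n%:R + z)) by ring.
rewrite IH // -[k.+2]addn1 -[k.+1]addn1 !natrD; ring.
Qed.

Definition Ft {F : numFieldType} n (z : F) k :=
  Cb F k * (3%:R * k%:R - 2%:R * n%:R + z) * Pf n z k / Qp z k.
Definition gt {F : numFieldType} n (z : F) k :=
  k%:R * Cb F k * Pf n.+1 z k / Qp z k.-1.

Lemma WZ1 (F : numFieldType) n (z : F) k : (0 < k)%N -> Qp z k != 0 ->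
  n%:R * (n%:R - z) * Ft n z k - n.+1%:R * (n.+1%:R - z) * Ft n.+1 z k
  = gt n z k.+1 - gt n z k.
Proof.
case: k => // k _.
rewrite Qp_rec mulf_eq0 negb_or => /andP[hq hd].
rewrite /Ft /gt /= Qp_rec.
have eC : k.+2%:R * Cb F k.+2 = 2%:R * (2%:R * k.+1%:R + 1) * Cb F k.+1 by rewrite mulrC CbS.
rewrite eC (@Pf_rec _ n.+1 z k.+1) //.
set c := Cb F k.+1; set p := Pf n.+1 z k.+1; set q := Qp z k.
set d := k.+1%:R ^+ 2 - z ^+ 2.
have -> : n%:R * (n%:R - z) * (c * (3%:R * k.+1%:R - 2%:R * n%:R + z) * Pf n z k.+1 / (q * d))
  = c * (3%:R * k.+1%:R - 2%:R * n%:R + z) / (q * d) * (Pf n z k.+1 * (n%:R * (n%:R - z))).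
  by field; rewrite hd hq.
rewrite (@Pf_shift F n z k.+1 erefl) -/p.
have hq' : q != 0 by [].
rewrite /d; clearbody c p q.
rewrite -[k.+1]addn1 -[n.+1]addn1 !natrD.
rewrite -[k.+1]addn1 natrD in hd.
field.
by rewrite hd hq'.
Qed.

Lemma Qp_neq0 (F : numFieldType) (z : F) k :
  (forall j, (1 <= j <= k)%N -> j%:R ^+ 2 - z ^+ 2 != 0) -> Qp z k != 0.
Proof.
elim: k => [|k IH] H; first by rewrite /Qp big_geq ?oner_neq0.
rewrite Qp_rec mulf_neq0 //; last by apply: H; rewrite leqnn.
by apply: IH => j /andP[h1 h2]; apply: H; rewrite h1 /= ltnW.
Qed.

Lemma Wsum (F : numFieldType) n (z : F) :
  (forall j, (1 <= j <= n)%N -> j%:R ^+ 2 - z ^+ 2 != 0) ->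
  \sum_(1 <= k < n.+1) n%:R * (n%:R - z) * Ft n z k = 2%:R * n%:R.
Proof.
elim: n => [|n IH] H; first by rewrite big_geq // mulr0.
have Hn : forall j, (1 <= j <= n)%N -> j%:R ^+ 2 - z ^+ 2 != 0.
  by move=> j /andP[h1 h2]; apply: H; rewrite h1 /= ltnW.
have e : \sum_(1 <= k < n.+2) n.+1%:R * (n.+1%:R - z) * Ft n.+1 z k =
   \sum_(1 <= k < n.+2) (n%:R * (n%:R - z) * Ft n z k - (gt n z k.+1 - gt n z k)).
  rewrite big_nat_cond [RHS]big_nat_cond; apply: eq_bigr => k /andP[/andP[h1 h2] _].
  rewrite -WZ1 //; first by ring.
  by apply: Qp_neq0 => j /andP[j1 j2]; apply: H; rewrite j1 /= (leq_trans j2).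
rewrite e sumrB telescope_sumr // big_nat_recr //= IH //.
have -> : n%:R * (n%:R - z) * Ft n z n.+1 = 0.
  case: n {IH H Hn e} => [|n]; first by rewrite mul0r mul0r.
  by rewrite /Ft (@Pf_rec _ n.+1 z n.+1) // subrr mul0r mulr0 mulr0 mul0r mulr0.
have -> : gt n z n.+2 = 0.
  by rewrite /gt (@Pf_rec _ n.+1 z n.+1) // subrr mul0r mulr0 mulr0 mul0r.
have -> : gt n z 1 = 2%:R.
  by rewrite /gt /Pf /Qp !big_geq // /Cb /= mulr1 divr1 mul1r.
rewrite -[n.+1]addn1 natrD; ring.
Qed.

Definition Qm {F : numFieldType} (z : F) k := \prod_(1 <= j < k) (j%:R ^+ 2 - z ^+ 2).
Definition Dn {F : numFieldType} n (z : F) k :=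
  \prod_(1 <= j < k.+1 | j != n) ((j%:R - n%:R) * (j%:R - n%:R + z)).
Definition bt {F : numFieldType} n (z : F) k :=
  (3%:R * k%:R - 2%:R * n%:R + z) / (k%:R * Cb F k) * Qm z k / Dn n z k.
Definition Gt {F : numFieldType} i (z : F) k :=
  Qm z k / (i%:R * (i%:R - z) * Cb F k.-1 * Dn i z k.-1).
Definition Tt {F : numFieldType} (z : F) k := - (Qm z k / (Cb F k.-1 * Dn 1 z k)).
Definition HD {F : numFieldType} n (z : F) :=
  forall j, (1 <= j)%N -> j != n -> (j%:R - n%:R) * (j%:R - n%:R + z) != 0.

Lemma Qm_rec (F : numFieldType) (z : F) k : (0 < k)%N ->
  Qm z k.+1 = Qm z k * (k%:R ^+ 2 - z ^+ 2).
Proof. by move=> hk; rewrite /Qm big_nat_recr. Qed.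

Lemma Dn_rec (F : numFieldType) n (z : F) k : k.+1 != n ->
  Dn n z k.+1 = Dn n z k * ((k.+1%:R - n%:R) * (k.+1%:R - n%:R + z)).
Proof. by move=> hk; rewrite /Dn (big_mkcond (fun j => j != n)) big_nat_recr //= hk -big_mkcond. Qed.

Lemma Dn_n (F : numFieldType) n (z : F) : Dn n z n = Pf n z n.
Proof.
case: n => [|n]; first by rewrite /Dn /Pf !big_geq.
rewrite /Dn (big_mkcond (fun j => j != n.+1)) big_nat_recr //= eqxx mulr1.
rewrite /Pf big_nat_cond [RHS]big_nat_cond; apply: eq_bigr => j /andP[/andP[_ h] _].
by rewrite ifT // neq_ltn h.
Qed.

Lemma Pf_nn (F : numFieldType) n (z : F) : (0 < n)%N ->
  Pf n.+1 z n.+1 = Pf n z n * (n%:R * (n%:R - z)).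
Proof.
move=> hn; rewrite Pf_shift // (@Pf_rec _ n.+1 z n) //.
rewrite -[n.+1]addn1 natrD; ring.
Qed.

Lemma Dn_shift (F : numFieldType) i (z : F) k : (0 < i)%N -> (i < k)%N ->
  Dn i.+1 z k = Dn i z k.-1 * (i%:R * (i%:R - z)).
Proof.
move=> hi; elim: k => // k IH hk.
rewrite ltnS leq_eqVlt in hk; case/orP: hk => [/eqP <-|hk].
  by rewrite /= !Dn_n Pf_nn.
rewrite Dn_rec; last by rewrite eqSS neq_ltn hk orbT.
rewrite IH //=.
case: k IH hk => // k IH hk.
rewrite (@Dn_rec _ i z k); last by rewrite neq_ltn hk orbT.
rewrite /= -!natr1; ring.
Qed.

Lemma Cb_neq0 (F : numFieldType) k : Cb F k != 0.
Proof. by rewrite /Cb pnatr_eq0 -lt0n bin_gt0 -addnn leq_addr. Qed.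

Lemma Dn_neq0 (F : numFieldType) n (z : F) k : HD n z -> Dn n z k != 0.
Proof.
move=> H; rewrite /Dn big_nat_cond.
apply: (big_ind (fun x => x != 0)); [exact: oner_neq0 | by move=> x y; apply: mulf_neq0 |].
by move=> j /andP[/andP[h1 _] h2]; apply: H.
Qed.

Lemma CbS' (F : numFieldType) k :
  Cb F k.+1 = 2%:R * (2%:R * k%:R + 1) * Cb F k / k.+1%:R.
Proof. by rewrite -CbS mulfK // pnatr_eq0. Qed.

Lemma two_k1 (F : numFieldType) k : 2%:R * k%:R + 1 != 0 :> F.
Proof. by rewrite -natrM natr1 pnatr_eq0. Qed.

Lemma WZ2 (F : numFieldType) i (z : F) k : (0 < i)%N -> (i <= k)%N ->
  HD i z -> i%:R - z != 0 ->
  bt i z k.+1 - bt i.+1 z k.+1 = Gt i z k.+2 - Gt i z k.+1.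
Proof.
move=> hi hik H hz.
have hD := @Dn_neq0 F i z k H.
have hK : (k.+1%:R - i%:R) * (k.+1%:R - i%:R + z) != 0 :> F.
  by apply: H => //; rewrite neq_ltn ltnS hik orbT.
rewrite /bt /Gt /= (@Dn_shift _ i z k.+1) // (@Qm_rec _ z k.+1) //.
rewrite (@Dn_rec _ i z k); last by rewrite neq_ltn ltnS hik orbT.
rewrite CbS'.
have hc := Cb_neq0 F k.
have h2 := two_k1 F k.
have hi0 : i%:R != 0 :> F by rewrite pnatr_eq0 -lt0n.
have hk0 : k.+1%:R != 0 :> F by rewrite pnatr_eq0.
move: hK hk0; rewrite -!natr1 => hK hk0.
set D := Dn i z k; set q := Qm z k.+1; set c := Cb F k.
rewrite mulf_eq0 negb_or in hK; case/andP: hK => hK1 hK2.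
field.
by rewrite hD hz hi0 hk0 hK1 hK2 h2 !andbT; exact: hc.
Qed.

Lemma WZ0 (F : numFieldType) (z : F) k : HD 1 z ->
  bt 1 z k.+1 = Tt z k.+2 - Tt z k.+1.
Proof.
move=> H.
have hD := @Dn_neq0 F 1 z k.+1 H.
have hK : (k.+2%:R - 1%:R) * (k.+2%:R - 1%:R + z) != 0 :> F by apply: H.
rewrite /bt /Tt /= (@Qm_rec _ z k.+1) // (@Dn_rec _ 1 z k.+1) // CbS'.
have hc := Cb_neq0 F k.
have h2 := two_k1 F k.
have hk0 : k.+1%:R != 0 :> F by rewrite pnatr_eq0.
move: hK hk0; rewrite -!natr1 => hK hk0.
set D := Dn 1 z k.+1; set q := Qm z k.+1; set c := Cb F k.
rewrite mulf_eq0 negb_or in hK; case/andP: hK => hK1 hK2.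
field.
rewrite add0r in hK2.
by rewrite hD hk0 hK2 h2 !andbT; exact: hc.
Qed.

Lemma Bsum1 (F : numFieldType) (z : F) N : HD 1 z -> (1 <= N)%N ->
  \sum_(1 <= k < N) bt 1 z k = Tt z N + 1.
Proof.
move=> H hN.
have -> : \sum_(1 <= k < N) bt 1 z k = \sum_(1 <= k < N) (Tt z k.+1 - Tt z k).
  rewrite big_nat_cond [RHS]big_nat_cond; apply: eq_bigr => k /andP[/andP[h1 _] _].
  by case: k h1 => // k _; rewrite WZ0.
rewrite telescope_sumr //.
have -> : Tt z 1 = -1 :> F.
  by rewrite /Tt /Qm big_geq // /Dn big_mkcond big_nat1 /= /Cb /= mulr1 divr1.
by rewrite opprK.
Qed.

Lemma Bstep (F : numFieldType) i (z : F) N : (0 < i)%N -> HD i z -> i%:R - z != 0 ->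
  (i < N)%N ->
  \sum_(i.+1 <= k < N) bt i.+1 z k = \sum_(i <= k < N) bt i z k - Gt i z N.
Proof.
move=> hi H hz hN.
rewrite (big_ltn hN).
have -> : \sum_(i.+1 <= k < N) bt i.+1 z k =
    \sum_(i.+1 <= k < N) (bt i z k - (Gt i z k.+1 - Gt i z k)).
  rewrite big_nat_cond [RHS]big_nat_cond; apply: eq_bigr => k /andP[/andP[h1 _] _].
  case: k h1 => // k h1; rewrite -WZ2 //; ring.
rewrite sumrB telescope_sumr //.
have -> : bt i z i = Gt i z i.+1.
  rewrite /bt /Gt /= (@Qm_rec _ z i) //.
  have hD := @Dn_neq0 F i z i H.
  have hc := Cb_neq0 F i.
  have hi0 : i%:R != 0 :> F by rewrite pnatr_eq0 -lt0n.
  set D := Dn i z i; set q := Qm z i.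
  field.
  by rewrite hD hz hi0 !andbT; exact: hc.
ring.
Qed.

Lemma real_ineq (R : realFieldType) (r a x : R) : 0 <= r -> 0 <= a ->
  8%:R * (a + r) + 8%:R <= x ->
  x * (x ^+ 2 + r ^+ 2) <= (2%:R * x - 1) * (x - a) * (x - a - r) /\ 0 < x - a - r.
Proof.
move=> hr ha hx.
have h1 : 7%:R * x <= 8%:R * (x - a - r) by lra.
have h2 : 15%:R * x <= 8%:R * (2%:R * x - 1) by lra.
have h3 : 8%:R * r <= x by lra.
have hx0 : 0 <= x by lra.
split; last by lra.
have h4 : 0 <= x - a - r by lra.
have h5 : x - a - r <= x - a by lra.
have e1 : 49%:R * x ^+ 2 <= 64%:R * ((x - a) * (x - a - r)) by nra.
have e2 : 735%:R * x ^+ 3 <= 512%:R * ((2%:R * x - 1) * ((x - a) * (x - a - r))).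
  have := ler_pM (mulr_ge0 (ler0n _ 15) hx0) (mulr_ge0 (ler0n _ 49) (sqr_ge0 x)) h2 e1.
  have e3 : 0 <= (x - a) * (x - a - r) by nra.
  nra.
have e4 : 64%:R * r ^+ 2 <= x ^+ 2 by nra.
nra.
Qed.
Lemma archiC (R : realType) (x : R[i]) : 0 <= x -> exists p : nat, x < p%:R.
Proof.
move=> hx.
have hI := ger0_Im hx.
have ex : x = (complex.Re x)%:C%C.
  by case: x hx hI => a b /= _ ->.
have hR : 0 <= complex.Re x by move: hx; rewrite ex lecR.
exists (Num.Def.archi_bound (complex.Re x)).
by rewrite ex -(rmorph_nat (real_complex R)) ltcR archi_boundP.
Qed.

Lemma null_half (R : realType) (u : nat -> R[i]) m0 :
  (forall m, (m0 <= m)%N -> `|u m.+1| <= `|u m| / 2%:R) -> u @ \oo --> 0.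
Proof.
move=> H.
have hp : forall p, `|u (m0 + p)%N| <= `|u m0| / 2%:R ^+ p.
  elim=> [|p IH]; first by rewrite addn0 expr0 divr1.
  rewrite addnS (le_trans (H _ (leq_addr _ _))) // exprSr invfM mulrA.
  by rewrite ler_pM2r ?invr_gt0 ?ltr0n.
apply/cvgrPdist_lt => e e0.
have [p0 hp0] := @archiC R _ (divr_ge0 (normr_ge0 (u m0)) (ltW e0)).
exists (m0 + p0)%N => // N /= hN.
rewrite sub0r normrN.
have -> : N = (m0 + (N - m0))%N by rewrite subnKC // (leq_trans (leq_addr _ _) hN).
apply: (le_lt_trans (hp _)).
rewrite ltr_pdivrMr ?exprn_gt0 ?ltr0n //.
rewrite -ltr_pdivrMl // mulrC.
apply: (lt_le_trans hp0).
have : (p0 <= 2 ^ (N - m0))%N.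
  apply: ltnW; apply: (leq_trans _ (ltn_expl _ (isT : 1 < 2)%N)); lia.
by rewrite -(ler_nat (R[i])) natrX.
Qed.

Lemma ratio_C (R : realType) (z : R[i]) (i : nat) : exists N0, forall k, (N0 <= k)%N ->
  `|k.+1%:R * (k.+1%:R ^+ 2 - z ^+ 2)| <=
     `|2%:R * (2%:R * k%:R + 1) * ((k.+1%:R - i%:R) * (k.+1%:R - i%:R + z))| / 2%:R
  /\ 2%:R * (2%:R * k%:R + 1) * ((k.+1%:R - i%:R) * (k.+1%:R - i%:R + z)) != 0.
Proof.
set r : R := Num.sqrt (complex.Re z ^+ 2 + complex.Im z ^+ 2).
have hz : `|z| = r%:C%C by rewrite normc_def.
have hr : 0 <= r by rewrite sqrtr_ge0.
set N0 := Num.Def.archi_bound (8%:R * (i%:R + r) + 8%:R : R).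
exists N0 => k hk.
have hN0 : (8%:R * (i%:R + r) + 8%:R : R) < N0%:R.
  by apply: archi_boundP; apply: addr_ge0; [apply: mulr_ge0 => //; apply: addr_ge0 | ].
have hK : (8%:R * (i%:R + r) + 8%:R : R) <= k.+1%:R.
  apply: (le_trans (ltW hN0)); rewrite ler_nat; lia.
have [h1 h2] := @real_ineq R _ _ _ hr (ler0n _ i) hK.
have hik : (i < k.+1)%N.
  have : (i%:R : R) < k.+1%:R by lra.
  by rewrite ltr_nat.
have h1' : (k.+1%:R * (k.+1%:R ^+ 2 + r ^+ 2) : R) <=
    (2%:R * k%:R + 1) * (k.+1%:R - i%:R) * (k.+1%:R - i%:R - r).
  by move: h1; rewrite -natr1; congr (_ <= _ * _ * _); ring.
have hC : (k.+1%:R * (k.+1%:R ^+ 2 + `|z| ^+ 2) : R[i]) <=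
    (2%:R * k%:R + 1) * (k.+1%:R - i%:R) * (k.+1%:R - i%:R - `|z|).
  rewrite hz.
  have -> : (k.+1%:R * (k.+1%:R ^+ 2 + r%:C%C ^+ 2) : R[i]) =
     (k.+1%:R * (k.+1%:R ^+ 2 + r ^+ 2))%:C%C.
    by rewrite ?(rmorphM, rmorphB, rmorphD, rmorphXn, rmorph_nat, rmorph1).
  have -> : ((2%:R * k%:R + 1) * (k.+1%:R - i%:R) * (k.+1%:R - i%:R - r%:C%C) : R[i]) =
     ((2%:R * k%:R + 1) * (k.+1%:R - i%:R) * (k.+1%:R - i%:R - r))%:C%C.
    by rewrite ?(rmorphM, rmorphB, rmorphD, rmorphXn, rmorph_nat, rmorph1).
  by rewrite lecR.
have hC2 : (0 : R[i]) < k.+1%:R - i%:R - `|z|.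
  rewrite hz.
  have -> : (k.+1%:R - i%:R - r%:C%C : R[i]) = (k.+1%:R - i%:R - r)%:C%C.
    by rewrite ?(rmorphM, rmorphB, rmorphD, rmorphXn, rmorph_nat, rmorph1).
  by rewrite ltcR.
have hKi : (0 : R[i]) < k.+1%:R - i%:R by rewrite subr_gt0 ltr_nat.
have hKiz : `|k.+1%:R - i%:R| - `|z| <= `|k.+1%:R - i%:R + z|.
  by apply: lerB_normD.
rewrite gtr0_norm // in hKiz.
have h2k : (0 : R[i]) < 2%:R * k%:R + 1.
  by rewrite -natrM natr1 ltr0n.
split.
  rewrite !normrM !normr_nat (gtr0_norm h2k) (gtr0_norm hKi).
  have -> : 2%:R * (2%:R * k%:R + 1) * ((k.+1%:R - i%:R) * `|k.+1%:R - i%:R + z|) / 2%:R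
     = (2%:R * k%:R + 1) * (k.+1%:R - i%:R) * `|k.+1%:R - i%:R + z| :> R[i].
    by field.
  apply: (le_trans (y := k.+1%:R * (k.+1%:R ^+ 2 + `|z| ^+ 2))).
    rewrite ler_pM2l ?ltr0n //.
    by apply: (le_trans (ler_normB _ _)); rewrite !normrX normr_nat.
  apply: (le_trans hC).
  by rewrite ler_pM2l // mulr_gt0.
rewrite !mulf_neq0 //.
all: try (by rewrite gt_eqF).
by rewrite -normr_gt0; exact: (lt_le_trans hC2 hKiz).
Qed.

Lemma null_ratio (R : realType) (z : R[i]) (i : nat) (u : nat -> R[i]) k0 :
  (forall k, (k0 <= k)%N ->
     u k.+2 * (2%:R * (2%:R * k%:R + 1) * ((k.+1%:R - i%:R) * (k.+1%:R - i%:R + z)))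
     = u k.+1 * (k.+1%:R * (k.+1%:R ^+ 2 - z ^+ 2))) -> u @ \oo --> 0.
Proof.
move=> H.
have [N0 HN] := @ratio_C R z i.
apply: (@null_half R u (maxn k0 N0).+1) => m hm.
case: m hm => // k hk.
have [hle hA] := HN k (leq_trans (leq_maxr _ _) hk).
have e := H k (leq_trans (leq_maxl _ _) hk).
set A := 2%:R * _ * _ in hle hA e.
have hA' : 0 < `|A| by rewrite normr_gt0.
rewrite -(ler_pM2r hA').
rewrite -normrM e normrM.
apply: (le_trans (ler_wpM2l (normr_ge0 (u k.+1)) hle)).
by rewrite mulrA mulrAC.
Qed.

Lemma RG (F : numFieldType) i (z : F) k : (0 < i)%N -> HD i z -> i%:R - z != 0 -> (i <= k)%N ->
  Gt i z k.+2 * (2%:R * (2%:R * k%:R + 1) * ((k.+1%:R - i%:R) * (k.+1%:R - i%:R + z)))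
  = Gt i z k.+1 * (k.+1%:R * (k.+1%:R ^+ 2 - z ^+ 2)).
Proof.
move=> hi H hz hik.
have hD := @Dn_neq0 F i z k H.
have hK : (k.+1%:R - i%:R) * (k.+1%:R - i%:R + z) != 0 :> F.
  by apply: H => //; rewrite neq_ltn ltnS hik orbT.
rewrite /Gt /= (@Qm_rec _ z k.+1) //.
rewrite (@Dn_rec _ i z k); last by rewrite neq_ltn ltnS hik orbT.
rewrite CbS'.
have hc := Cb_neq0 F k.
have h2 := two_k1 F k.
have hi0 : i%:R != 0 :> F by rewrite pnatr_eq0 -lt0n.
have hk0 : k.+1%:R != 0 :> F by rewrite pnatr_eq0.
move: hK hk0; rewrite -!natr1 => hK hk0.
set D := Dn i z k; set q := Qm z k.+1; set c := Cb F k.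
rewrite mulf_eq0 negb_or in hK; case/andP: hK => hK1 hK2.
field.
by rewrite hD hz hi0 hk0 hK1 hK2 h2 !andbT; exact: hc.
Qed.

Lemma RT (F : numFieldType) (z : F) k : HD 1 z ->
  Tt z k.+2 * (2%:R * (2%:R * k%:R + 1) * ((k.+1%:R - 0%:R) * (k.+1%:R - 0%:R + z)))
  = Tt z k.+1 * (k.+1%:R * (k.+1%:R ^+ 2 - z ^+ 2)).
Proof.
move=> H.
have hD := @Dn_neq0 F 1 z k.+1 H.
have hK : (k.+2%:R - 1%:R) * (k.+2%:R - 1%:R + z) != 0 :> F by apply: H.
rewrite /Tt /= (@Qm_rec _ z k.+1) // (@Dn_rec _ 1 z k.+1) // CbS'.
have hc := Cb_neq0 F k.
have h2 := two_k1 F k.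
have hk0 : k.+1%:R != 0 :> F by rewrite pnatr_eq0.
move: hK hk0; rewrite -!natr1 => hK hk0.
set D := Dn 1 z k.+1; set q := Qm z k.+1; set c := Cb F k.
rewrite mulf_eq0 negb_or in hK; case/andP: hK => hK1 hK2.
rewrite add0r in hK2.
field.
by rewrite hD hk0 hK2 h2 !andbT; exact: hc.
Qed.

Lemma HD_down (F : numFieldType) n (z : F) i : HD n z -> (i <= n)%N -> HD i z.
Proof.
move=> H hin j hj hji.
have := H (j + (n - i))%N.
have -> : ((j + (n - i))%:R - n%:R : F) = j%:R - i%:R.
  by rewrite natrD natrB //; ring.
apply; first lia.
apply/negP => /eqP e; move/negP: hji; apply; apply/eqP; lia.
Qed.

Lemma nz_down (F : numFieldType) n (z : F) i : HD n z -> (0 < i)%N -> (i < n)%N -> i%:R - z != 0.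
Proof.
move=> H hi hin.
have := H (n - i)%N.
have -> : ((n - i)%:R - n%:R : F) = - i%:R by rewrite natrB 1?ltnW //; ring.
move=> h; have {h} := h ltac:(lia) ltac:(apply/negP => /eqP; lia).
rewrite mulf_eq0 negb_or => /andP[_].
by apply: contra => /eqP e; rewrite -oppr_eq0 opprD opprK e.
Qed.

Lemma part2 (R : realType) n (z : R[i]) : HD n z -> forall m, (0 < m)%N -> (m <= n)%N ->
  (fun N => \sum_(m <= k < N) bt m z k) @ \oo --> (1 : R[i]).
Proof.
move=> H; elim=> // m IH _ hmn.
case: m IH hmn => [_ hn1|m IH hmn].
  have H1 := @HD_down _ n z 1 H hn1.
  have hT : Tt z @ \oo --> (0 : R[i]) := @null_ratio R z 0 (Tt z) 0 (fun k _ => @RT _ z k H1).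
  have h : (fun N => Tt z N + 1) @ \oo --> (0 + 1 : R[i]).
    by apply: cvgD; [exact: hT | exact: cvg_cst].
  rewrite add0r in h.
  apply: (cvg_trans _ h); apply: near_eq_cvg.
  by exists 1%N => // N /= hN; rewrite Bsum1.
have hm : (m.+1 <= n)%N by apply: ltnW.
have Hm := @HD_down _ n z m.+1 H hm.
have hz : m.+1%:R - z != 0 := @nz_down _ n z m.+1 H (ltn0Sn m) hmn.
have hG : Gt m.+1 z @ \oo --> (0 : R[i]) :=
  @null_ratio R z m.+1 (Gt m.+1 z) m.+1 (fun k hk => @RG _ m.+1 z k (ltn0Sn m) Hm hz hk).
have h : (fun N => \sum_(m.+1 <= k < N) bt m.+1 z k - Gt m.+1 z N) @ \oo --> (1 - 0 : R[i]).
  by apply: cvgB; [exact: (IH (ltn0Sn m) hm) | exact: hG].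
rewrite subr0 in h.
apply: (cvg_trans _ h); apply: near_eq_cvg.
by exists m.+2 => // N /= hN; rewrite (@Bstep _ m.+1 z N (ltn0Sn m) Hm hz hN).
Qed.

Theorem mainTheorem2 (R : realType) (n : nat) (z : R[i]) (hn : (0 < n)%N) :
  ((forall j : nat, (1 <= j <= n)%N -> j%:R ^+ 2 - z ^+ 2 != 0) ->
   n%:R - z != 0 ->
   \sum_(1 <= k < n.+1)
      'C(k.*2, k)%:R * (3%:R * k%:R - 2%:R * n%:R + z)
      * (\prod_(1 <= j < k) ((j%:R - n%:R) * (j%:R - n%:R + z)))
      / (\prod_(1 <= j < k.+1) (j%:R ^+ 2 - z ^+ 2))
   = 2%:R / (n%:R - z))
  /\
  ((forall j : nat, (1 <= j)%N -> j != n ->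
      (j%:R - n%:R) * (j%:R - n%:R + z) != 0) ->
   (fun N : nat =>
      \sum_(n <= k < N)
        (3%:R * k%:R - 2%:R * n%:R + z) / (k%:R * 'C(k.*2, k)%:R)
        * (\prod_(1 <= j < k) (j%:R ^+ 2 - z ^+ 2))
        / (\prod_(1 <= j < k.+1 | j != n)
              ((j%:R - n%:R) * (j%:R - n%:R + z))))
     @ \oo --> (1 : R[i])).
Proof.
split.
  move=> H1 H2.
  have W := @Wsum _ n z H1; rewrite -mulr_sumr in W.
  transitivity (\sum_(1 <= k < n.+1) Ft n z k); first by [].
  have hn0 : n%:R != 0 :> R[i] by rewrite pnatr_eq0 -lt0n.
  apply: (@mulfI _ (n%:R * (n%:R - z))); first by rewrite mulf_neq0.
  rewrite W; field.
  exact: H2.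
move=> H.
exact: (@part2 R n z H n hn (leqnn n)).
Qed.
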